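(* Fix $\lambda_s>0,\lambda>0$, $\alpha\in(0,1)$ and a constant $c>0$. For each $n\ge3$ let $\tilde n(n)$ be an integer with $1\le\tilde n(n)\le n$ and $\tilde n(n)\le c\,n^\alpha$. Then there exist $C>0$ and $N$ such that for all $n\ge N$ and every choice of $\tilde n(n)$ distinct jammed links of the ring $R(n)$, the average age of the jammed ring satisfies $$\Delta^\ell\le\begin{cases}C\,n^{\alpha}, & \alpha\ge \tfrac12,\\ C\sqrt n, & \alpha<\tfrac12.\end{cases}$$
   Context: Version-age model. A gossip network on a finite node set $\mathcal N$ is specified by source rates $\lambda_{0j}>0$ ($j\in\mathcal N$) and gossip rates $\lambda_{ij}\ge 0$ for ordered pairs $i\neq j$ ($\lambda_{ij}$ is the rate at which node $i$ sends updates to node $j$); $\lambda_s>0$ is the source's update rate. For nonempty $S\subseteq\mathcal N$ let $N(S)=\{i\in\mathcal N\setminus S:\ \sum_{j\in S}\lambda_{ij}>0\}$, and define the version ages recursively by $$\Delta_S=\frac{\lambda_s+\sum_{i\in N(S)}\big(\sum_{j\in S}\lambda_{ij}\big)\Delta_{S\cup\{i\}}}{\sum_{j\in S}\lambda_{0j}+\sum_{i\in N(S)}\sum_{j\in S}\lambda_{ij}}$$ (well defined by downward induction on $|S|$); $\Delta_i=\Delta_{\{i\}}$. Ring $R(n)$: nodes $\{1,\dots,n\}$, $\lambda_{0j}=\lambda/n$, and for each of the $n$ ring links $\{i,i+1\}$ (indices mod $n$) $\lambda_{i,i+1}=\lambda_{i+1,i}=\lambda/2$; all other rates $0$. Jamming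 $\tilde n$ distinct ring links means setting both rates of each of these links to $0$. The average age of the jammed ring is $\Delta^\ell=\frac1n\sum_{i=1}^n\Delta_i$ computed in the jammed network. *)

(* Defs.v *)
From HB Require Import structures.
From mathcomp Require Import all_boot all_order all_algebra.
From mathcomp Require Import all_classical all_reals all_analysis.
Set Implicit Arguments. Unset Strict Implicit. Unset Printing Implicit Defensive.
Import Order.TTheory GRing.Theory Num.Theory.
Local Open Scope ring_scope.

(* A gossip network on the node set 'I_n:
   l0 j   = source rate lambda_{0j},
   lg i j = gossip rate lambda_{ij} (node i sends to node j),
   ls     = source update rate lambda_s. *)

Definition in_rate (R : realType) (n : nat) (lg : 'I_n -> 'I_n -> R)
  (S : {set 'I_n}) (i : 'I_n) : R := \sum_(j in S) lg i j.

Definition nbhd (R : realType) (n : nat) (lg : 'I_n -> 'I_n -> R)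
  (S : {set 'I_n}) : {set 'I_n} :=
  [set i | (i \notin S) && (0 < in_rate lg S i)].

(* The recursion for Delta_S, unrolled with a fuel parameter.  Since every
   recursive call strictly enlarges S, for nonempty S fuel >= n - #|S| + 1
   suffices and the value is then the (unique) value of the recursion;
   [version_age] uses fuel n, which suffices for every nonempty S. *)
Fixpoint vage_fuel (R : realType) (n : nat) (ls : R) (l0 : 'I_n -> R)
  (lg : 'I_n -> 'I_n -> R) (fuel : nat) (S : {set 'I_n}) : R :=
  match fuel with
  | 0%N => 0
  | k.+1 =>
      (ls + \sum_(i in nbhd lg S) in_rate lg S i * vage_fuel ls l0 lg k (i |: S))
      / (\sum_(j in S) l0 j + \sum_(i in nbhd lg S) in_rate lg S i)
  end.

Definition version_age (R : realType) (n : nat) (ls : R) (l0 : 'I_n -> R)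
  (lg : 'I_n -> 'I_n -> R) (S : {set 'I_n}) : R :=
  vage_fuel ls l0 lg n S.

(* Ring R(n) on nodes 'I_n (node k here is node k+1 of the paper).
   Link number i is {i, i+1 mod n}; J is the set of jammed links.
   lambda_{i,i+1} = lambda_{i+1,i} = lambda/2 for unjammed links, 0 otherwise. *)
Definition ring_source (R : realType) (n : nat) (lam : R) (j : 'I_n) : R :=
  lam / n%:R.

Definition ring_gossip (R : realType) (n : nat) (lam : R) (J : {set 'I_n})
  (i j : 'I_n) : R :=
  if ((j == ordS i) && (i \notin J)) || ((i == ordS j) && (j \notin J))
  then lam / 2 else 0.

Definition jammed_ring_avg_age (R : realType) (n : nat) (ls lam : R)
  (J : {set 'I_n}) : R :=
  n%:R^-1 * \sum_(i : 'I_n)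
     version_age ls (ring_source lam) (ring_gossip lam J) [set i].

(* Main.v *)
Require Import Defs.
From HB Require Import structures.
From mathcomp Require Import all_boot all_order all_algebra.
From mathcomp Require Import all_classical all_reals all_analysis.
From mathcomp Require Import lra zify ring.
Import Order.TTheory GRing.Theory Num.Theory.
Local Open Scope ring_scope.

Lemma in_rate_ge0 (R : realType) n (lg : 'I_n -> 'I_n -> R) S i :
  (forall i j, 0 <= lg i j) -> 0 <= in_rate lg S i.
Proof. by move=> H; apply: sumr_ge0 => j _. Qed.

Lemma vage_le (R : realType) n (ls : R) (l0 : 'I_n -> R) (lg : 'I_n -> 'I_n -> R) (h : {set 'I_n} -> R) :
  0 <= ls -> (forall j, 0 <= l0 j) -> (forall i j, 0 <= lg i j) ->
  (forall S, 0 <= h S) ->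
  (forall S : {set 'I_n}, 0 < \sum_(j in S) l0 j + \sum_(i in nbhd lg S) in_rate lg S i ->
     1 + \sum_(v in nbhd lg S) in_rate lg S v * h (v |: S) <=
     (\sum_(j in S) l0 j + \sum_(i in nbhd lg S) in_rate lg S i) * h S) ->
  forall k S, vage_fuel ls l0 lg k S <= ls * h S.
Proof.
move=> hls hl0 hlg hh hsup; elim=> [|k IH] S /=.
  exact: mulr_ge0.
set D := (X in _ / X).
have D0 : 0 <= D.
  by apply: addr_ge0; apply: sumr_ge0 => ? _ //; exact: in_rate_ge0.
have [Dz|Dp] := eqVneq D 0.
  by rewrite Dz invr0 mulr0; exact: mulr_ge0.
have {}Dp : 0 < D by rewrite lt_def Dp D0.
rewrite ler_pdivrMr //.
apply: (le_trans (y := ls * (1 + \sum_(v in nbhd lg S) in_rate lg S v * h (v |: S)))).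
  rewrite mulrDr mulr1 lerD2l mulr_sumr; apply: ler_sum => v _.
  rewrite mulrCA; apply: ler_wpM2l; first exact: in_rate_ge0.
  exact: IH.
rewrite -mulrA; apply: ler_wpM2l => //; rewrite mulrC; exact: hsup.
Qed.

Local Close Scope ring_scope.

Section Orbit.
Variable n : nat.

Lemma val_iterS d (i : 'I_n) : val (iter d (@ordS n) i) = (i + d) %% n.
Proof.
elim: d => [|d IH] /=; first by rewrite addn0 modn_small.
by rewrite IH -addn1 modnDml -addnA addn1 addnS.
Qed.

Lemma iterP_comm k (y : 'I_n) :
  iter k (@ord_pred n) (ordS y) = ordS (iter k (@ord_pred n) y).
Proof. by elim: k => [|k IH] //=; rewrite IH ordSK ord_predK. Qed.

Lemma iterPS k d (i : 'I_n) :
  iter k (@ord_pred n) (iter (k + d) (@ordS n) i) = iter d (@ordS n) i.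
Proof.
elim: k => [|k IH] //=.
by rewrite iterP_comm ordSK IH.
Qed.

Lemma reach (x y : 'I_n) : exists k, (0 < k)%N /\ iter k (@ordS n) y = x.
Proof.
have n0 : (0 < n)%N by case: n x => [[]|].
exists (x + n - y + n)%N; split; first lia.
apply: val_inj; rewrite val_iterS /=.
have -> : (y + (x + n - y + n) = 2 * n + x)%N by have := ltn_ord y; lia.
by rewrite modnMDl modn_small.
Qed.

Variable J : {set 'I_n}.
Variable j0 : 'I_n.
Hypothesis Hj0 : j0 \in J.

Lemma ex_dist (i : 'I_n) : exists d, iter d (@ordS n) i \in J.
Proof. by have [k [_ hk]] := reach j0 i; exists k; rewrite hk. Qed.

Definition dist i := ex_minn (ex_dist i).
Definition key i := iter (dist i) (@ordS n) i.

Lemma key_in i : key i \in J.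
Proof. by rewrite /key /dist; case: ex_minnP. Qed.

Lemma dist_min i d : iter d (@ordS n) i \in J -> (dist i <= d)%N.
Proof. by rewrite /dist; case: ex_minnP => m _ H /H. Qed.

Lemma ex_elen (j : 'I_n) : exists e, (0 < e)%N && (iter e (@ord_pred n) j \in J).
Proof.
have [k [k0 hk]] := reach j j0; exists k; rewrite k0 /=.
by rewrite -hk; have := iterPS k 0 j0; rewrite addn0 => ->.
Qed.

Definition elen j := ex_minn (ex_elen j).

Lemma elen_gt0 j : (0 < elen j)%N.
Proof. by rewrite /elen; case: ex_minnP => m /andP[]. Qed.

Lemma elen_min j e : (0 < e)%N -> iter e (@ord_pred n) j \in J -> (elen j <= e)%N.
Proof. by rewrite /elen; case: ex_minnP => m _ H e0 he; apply: H; rewrite e0. Qed.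

Lemma elen_link j k : (0 < k)%N -> (k < elen j)%N -> iter k (@ord_pred n) j \notin J.
Proof.
move=> k0 ke; apply/negP => hk.
by have := @elen_min j k k0 hk; rewrite leqNgt ke.
Qed.

Definition Seg j := [set iter (val k) (@ord_pred n) j | k : 'I_(elen j)].

Lemma key_seg i : i \in Seg (key i).
Proof.
set j := key i; set d := dist i; set e := elen j.
have hd : (d < e)%N.
  rewrite ltnNge; apply/negP => hle.
  have e0 : (0 < e)%N := elen_gt0 j.
  have : iter e (@ord_pred n) j \in J.
    by rewrite /e /elen; case: ex_minnP => m /andP[].
  have -> : j = iter (e + (d - e)) (@ordS n) i by rewrite subnKC.
  rewrite iterPS => /dist_min.
  rewrite -/d; lia.
apply/imsetP; exists (Ordinal hd) => //=.
by have := iterPS d 0 i; rewrite addn0.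
Qed.

Lemma seg_self j : j \in Seg j.
Proof. apply/imsetP; exists (Ordinal (elen_gt0 j)) => //. Qed.

Local Open Scope ring_scope.
Lemma sum_inv_seg (R : realType) :
  \sum_(i : 'I_n) ((#|Seg (key i)|)%:R : R)^-1 <= (#|J|)%:R.
Proof.
rewrite (partition_big (fun i => key i) (mem J)) /=; last by move=> i _; exact: key_in.
rewrite -sumr_const ler_sum // => j jJ.
apply: (le_trans (y := \sum_(i in Seg j) ((#|Seg j|)%:R : R)^-1)).
  rewrite [X in _ <= X]big_mkcond [X in X <= _]big_mkcond /=.
  apply: ler_sum => i _.
  case: eqP => [<-|_]; first by rewrite key_seg.
  by case: ifP.
have H m : (0 < m)%N -> (((m%:R : R)^-1) *+ m = 1).
  by move=> m0; rewrite -[_ *+ m]mulr_natr mulVf // pnatr_eq0 -lt0n.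
rewrite sumr_const H // card_gt0.
by apply/set0Pn; exists j; exact: seg_self.
Qed.

End Orbit.

Local Open Scope ring_scope.

Lemma change (P : nat -> bool) e a b : (a < e)%N -> (b < e)%N -> P a -> ~~ P b ->
  exists k, (k.+1 < e)%N /\ P k != P k.+1.
Proof.
move=> ae be Pa Pb.
have [/existsP [k /andP[k1 hk]]|none] :=
  boolP [exists k : 'I_e, (k.+1 < e)%N && (P k != P k.+1)].
  by exists k.
have H : forall k, (k < e)%N -> P k = P 0%N.
  elim=> [//|k IH] ke.
  have ke' : (k < e)%N by apply: ltnW.
  rewrite -(IH ke'); apply/eqP; apply: contraNT none => hk.
  by apply/existsP; exists (Ordinal ke'); rewrite /= ke eq_sym hk.
by move: Pb; rewrite (H b be) -(H a ae) Pa.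
Qed.

Lemma eqle (R : realType) (x y : R) : x = y -> x <= y.
Proof. by move->. Qed.

Section RingSeg.
Variables (R : realType) (n : nat) (lam ls : R) (J : {set 'I_n}).
Hypotheses (lam0 : 0 < lam) (ls0 : 0 < ls) (n0 : (0 < n)%N).

Definition psi (s0 t : nat) : R :=
  if t == 0%N then n%:R / lam + 2 * s0%:R / lam
  else n%:R / lam / s0%:R + 2 * (s0 - t)%:R / lam.

Variable s0 : nat.
Hypothesis s00 : (0 < s0)%N.

Lemma nl_gt0 : 0 < n%:R / lam.
Proof. by apply: divr_gt0 => //; rewrite ltr0n. Qed.

Lemma s0_gt0 : 0 < (s0%:R : R).
Proof. by rewrite ltr0n. Qed.

Lemma twox_ge0 (x : nat) : 0 <= 2 * x%:R / lam.
Proof. by rewrite divr_ge0 // ?mulr_ge0 // ltW. Qed.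

Lemma psi_ge0 t : 0 <= psi s0 t.
Proof.
have := nl_gt0; have := s0_gt0 => h1 h2.
rewrite /psi; case: eqP => _.
  by apply: addr_ge0; [exact: ltW | exact: twox_ge0].
apply: addr_ge0; last exact: twox_ge0.
by apply: divr_ge0; exact: ltW.
Qed.

Lemma psi_anti t t' : (t <= t')%N -> psi s0 t' <= psi s0 t.
Proof.
move=> tt'; have := nl_gt0; have := s0_gt0 => h1 h2.
rewrite /psi; case: (eqVneq t' 0%N) => [t'0|t'0].
  by have -> : t = 0%N by lia.
case: eqP => [_|t0].
  apply: lerD.
    rewrite ler_pdivrMr // ler_peMr ?ler1n //; exact: ltW.
  apply: ler_wpM2r; first by rewrite invr_ge0 ltW.
  by apply: ler_wpM2l => //; rewrite ler_nat leq_subr.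
apply: lerD => //.
apply: ler_wpM2r; first by rewrite invr_ge0 ltW.
by apply: ler_wpM2l => //; rewrite ler_nat; apply: leq_sub2l.
Qed.

Lemma psi_step t : (0 < t)%N -> (t < s0)%N -> psi s0 t.+1 + 2 / lam <= psi s0 t.
Proof.
move=> t0 ts; rewrite /psi /=.
have -> : (t == 0%N) = false by lia.
have -> : (s0 - t = (s0 - t.+1).+1)%N by lia.
rewrite -addn1 natrD; apply: eqle.
by field; rewrite (lt0r_neq0 lam0) pnatr_eq0 -lt0n s00.
Qed.

Variables (f : nat -> 'I_n) (e : nat).
Definition SegS := [set f (val k) | k : 'I_e].
Hypothesis hf : forall k, (k.+1 < e)%N -> f k = ordS (f k.+1) /\ f k.+1 \notin J.
Hypothesis s0S : (s0 <= #|SegS|)%N.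

Let lg := ring_gossip lam J.
Let l0 := ring_source lam (n:=n).

Lemma lg_ge0 i j : 0 <= lg i j.
Proof. rewrite /lg /ring_gossip; case: ifP => // _; apply: divr_ge0; [exact: ltW|by []]. Qed.

Definition hS (S : {set 'I_n}) := psi s0 #|S :&: SegS|.

Lemma card_add v (S : {set 'I_n}) : v \in SegS -> v \notin S ->
  #|(v |: S) :&: SegS| = #|S :&: SegS|.+1.
Proof.
move=> vS vnS; rewrite finset.setIUl.
have -> : [set v] :&: SegS = [set v] by apply/finset.setIidPl; rewrite finset.sub1set.
by rewrite finset.cardsU1 inE (negbTE vnS).
Qed.

Lemma in_rate_ge (S : {set 'I_n}) v u : u \in S -> lg v u <= in_rate lg S v.
Proof.
move=> uS; rewrite /in_rate (bigD1 u) //= lerDl.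
by apply: sumr_ge0 => j _; exact: lg_ge0.
Qed.

Lemma supersol (S : {set 'I_n}) :
  0 < \sum_(j in S) l0 j + \sum_(i in nbhd lg S) in_rate lg S i ->
  1 + \sum_(v in nbhd lg S) in_rate lg S v * hS (v |: S) <=
  (\sum_(j in S) l0 j + \sum_(i in nbhd lg S) in_rate lg S i) * hS S.
Proof.
move=> Dp.
have Sne : S != finset.set0.
  apply: contraTneq Dp => ->; rewrite big_set0 add0r.
  rewrite big1 ?ltxx // => v _; rewrite /in_rate big_set0 //.
have S1 : (1 <= #|S|)%N by rewrite card_gt0.
have hl0 : \sum_(j in S) l0 j = #|S|%:R * (lam / n%:R).
  by rewrite sumr_const mulr_natl.
set A := #|S|%:R * (lam / n%:R) * hS S.
set B := \sum_(v in nbhd lg S) in_rate lg S v * (hS S - hS (v |: S)).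
have hB : B = \sum_(i in nbhd lg S) in_rate lg S i * hS S -
              \sum_(v in nbhd lg S) in_rate lg S v * hS (v |: S).
  by rewrite /B -sumrB; apply: eq_bigr => v _; rewrite mulrBr.
have A0 : 0 <= A.
  apply: mulr_ge0; last exact: psi_ge0.
  by apply: mulr_ge0 => //; apply: divr_ge0; [exact: ltW|].
have B0 : 0 <= B.
  apply: sumr_ge0 => v _; apply: mulr_ge0; first by apply: in_rate_ge0; exact: lg_ge0.
  rewrite subr_ge0; apply: psi_anti; apply: subset_leq_card.
  by apply: finset.setSI; apply: finset.subsetUr.
suff : 1 <= A \/ 1 <= B.
  rewrite hl0 mulrDl -/A mulr_suml; move: hB; lra.
have nR : (n%:R : R) != 0 by rewrite pnatr_eq0 -lt0n.
have laR : lam != 0 by exact: lt0r_neq0.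
set t := #|S :&: SegS|.
have hSt : hS S = psi s0 t by [].
have [t0|t0] := eqVneq t 0%N.
  left; rewrite /A hSt /psi t0 eqxx.
  apply: (le_trans (y := #|S|%:R * (lam / n%:R) * (n%:R / lam))).
    have -> : #|S|%:R * (lam / n%:R) * (n%:R / lam) = #|S|%:R :> R by field; rewrite nR laR.
    by rewrite ler1n.
  apply: ler_wpM2l; first by apply: mulr_ge0 => //; apply: divr_ge0; [exact: ltW|].
  rewrite lerDl; apply: divr_ge0; [apply: mulr_ge0 => //|exact: ltW].
have tS : (t <= #|S|)%N by apply: subset_leq_card; apply: finset.subsetIl.
have [st|ts] := leqP s0 t.
  left; rewrite /A hSt /psi (negbTE t0).
  apply: (le_trans (y := s0%:R * (lam / n%:R) * (n%:R / lam / s0%:R))).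
    have s0R : (s0%:R : R) != 0 by rewrite pnatr_eq0 -lt0n.
    have -> : s0%:R * (lam / n%:R) * (n%:R / lam / s0%:R) = 1 :> R by field; rewrite nR laR s0R.
    by [].
  apply: ler_pM.
  - apply: mulr_ge0 => //; apply: divr_ge0; [exact: ltW|by []].
  - by apply: divr_ge0; [exact: (ltW nl_gt0)|].
  - apply: ler_wpM2r; first by apply: divr_ge0; [exact: ltW|].
    by rewrite ler_nat; apply: leq_trans tS.
  - rewrite lerDl; apply: divr_ge0; [apply: mulr_ge0 => //|exact: ltW].
right.
have [a aSS] : exists a, a \in S :&: SegS.
  by apply/finset.set0Pn; rewrite -card_gt0 lt0n.
have [b bSeg bnS] : exists2 b, b \in SegS & b \notin S.
  apply/exists_inP; apply: contraTT ts => /exists_inPn H; rewrite /t.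
  have -> : S :&: SegS = SegS.
    apply/finset.setIidPr/fintype.subsetP => x xS; have := H x xS; by rewrite negbK.
  by rewrite -leqNgt.
move: aSS; rewrite inE => /andP[aS /imsetP[ka _ aE]]; rewrite aE in aS.
move: bSeg => /imsetP[kb _ bE]; rewrite bE in bnS.
have [k [ke hk]] := @change (fun k => f k \in S) e _ _ (ltn_ord ka) (ltn_ord kb) aS bnS.
have [fk fnJ] := hf k ke.
have [v [u [vSeg [vnS [uS lvu]]]]] :
   exists v u, [/\ v \in SegS, v \notin S, u \in S & lg v u = lam / 2].
  have kSeg : f k \in SegS by apply/imsetP; exists (Ordinal (ltnW ke)).
  have k1Seg : f k.+1 \in SegS by apply/imsetP; exists (Ordinal ke).
  have hk1 : (f k.+1 \in S) = ~~ (f k \in S).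
    by move: hk; case: (f k \in S); case: (f k.+1 \in S).
  case: (boolP (f k \in S)) hk1 => hkS hk1.
  - exists (f k.+1), (f k); split; rewrite ?hk1 ?hkS //.
    by rewrite /lg /ring_gossip fk eqxx fnJ.
  - exists (f k), (f k.+1); split; rewrite ?hk1 ?hkS //.
    by rewrite /lg /ring_gossip fk eqxx fnJ orbT.
have rv : lam / 2 <= in_rate lg S v by rewrite -lvu; exact: in_rate_ge.
have vnb : v \in nbhd lg S.
  rewrite inE vnS /=; apply: lt_le_trans rv; apply: divr_gt0 => //.
rewrite /B (bigD1 v) //=.
apply: (le_trans (y := in_rate lg S v * (hS S - hS (v |: S)))); last first.
  rewrite lerDl; apply: sumr_ge0 => w _; apply: mulr_ge0; first by apply: in_rate_ge0; exact: lg_ge0.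
  rewrite subr_ge0; apply: psi_anti; apply: subset_leq_card.
  by apply: finset.setSI; apply: finset.subsetUr.
have step : 2 / lam <= hS S - hS (v |: S).
  rewrite /hS card_add // -/t; have t0p : (0 < t)%N by rewrite lt0n.
  have := psi_step t t0p ts; lra.
apply: (le_trans (y := lam / 2 * (2 / lam))).
  by apply: eqle; field.
apply: ler_pM => //.
- by apply: divr_ge0; [exact: ltW|].
- by apply: divr_ge0; [|exact: ltW].
Qed.

Lemma seg_bound i : i \in SegS ->
  version_age ls (ring_source lam) (ring_gossip lam J) [set i] <= ls * psi s0 1.
Proof.
move=> iS.
have -> : psi s0 1 = hS [set i].
  rewrite /hS; have -> : [set i] :&: SegS = [set i] by apply/finset.setIidPl; rewrite finset.sub1set.
  by rewrite finset.cards1.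
apply: vage_le.
- exact: ltW.
- by move=> j; rewrite /ring_source; apply: divr_ge0; [exact: ltW|].
- exact: lg_ge0.
- by move=> S; exact: psi_ge0.
- exact: supersol.
Qed.

End RingSeg.

Lemma node_bound (R : realType) n (lam ls : R) (J : {set 'I_n}) j0 (Hj0 : j0 \in J) m :
  0 < lam -> 0 < ls -> (0 < n)%N -> (0 < m)%N -> (n <= 4 * m * m)%N ->
  forall i, version_age ls (ring_source lam) (ring_gossip lam J) [set i] <=
    ls * (n%:R / lam * (#|Seg n J j0 Hj0 (key n J j0 Hj0 i)|%:R)^-1 + 6 * m%:R / lam).
Proof.
move=> lam0 ls0 n0 m0 nm i.
set j := key n J j0 Hj0 i.
set e := elen n J j0 Hj0 j.
set L := #|Seg n J j0 Hj0 j|.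
have L0 : (0 < L)%N by rewrite card_gt0; apply/finset.set0Pn; exists j; exact: seg_self.
set s0 := minn L m.
have s00 : (0 < s0)%N by rewrite leq_min L0 m0.
have hf : forall k, (k.+1 < e)%N ->
    iter k (@ord_pred n) j = ordS (iter k.+1 (@ord_pred n) j) /\
    iter k.+1 (@ord_pred n) j \notin J.
  move=> k ke; split; first by rewrite /= ord_predK.
  exact: (@elen_link n J j0 Hj0 j k.+1 (ltn0Sn k) ke).
have s0S : (s0 <= #|SegS n (fun k => iter k (@ord_pred n) j) e|)%N by apply: geq_minl.
have := @seg_bound R n lam ls J lam0 ls0 n0 s0 s00 _ e hf s0S i (key_seg n J j0 Hj0 i).
move/le_trans; apply; apply: ler_wpM2l; first exact: ltW.
rewrite /psi /=.
have nl : 0 <= n%:R / lam by apply: divr_ge0; [|exact: ltW].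
have h1 : n%:R / lam / s0%:R <= n%:R / lam * L%:R^-1 + n%:R / lam / m%:R.
  rewrite /s0; case: (leqP L m) => hLm.
    rewrite lerDl; apply: divr_ge0 => //.
  rewrite lerDr; apply: mulr_ge0 => //; rewrite invr_ge0 //.
have h2 : 2 * (s0 - 1)%:R / lam <= 2 * m%:R / lam.
  apply: ler_wpM2r; first by rewrite invr_ge0 ltW.
  apply: ler_wpM2l => //; rewrite ler_nat; apply: leq_trans (leq_subr _ _) _; exact: geq_minr.
have h3 : n%:R / lam / m%:R <= 4 * m%:R / lam.
  have mR : (m%:R : R) != 0 by rewrite pnatr_eq0 -lt0n.
  have laR : lam != 0 by exact: lt0r_neq0.
  rewrite -subr_ge0.
  have -> : 4 * m%:R / lam - n%:R / lam / m%:R = ((4 * m * m)%N%:R - n%:R) / (lam * m%:R).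
    by rewrite !natrM; field; rewrite laR mR.
  apply: divr_ge0; last by apply: mulr_ge0; [exact: ltW|].
  by rewrite subr_ge0 ler_nat.
lra.
Qed.

Lemma isqrt n : (0 < n)%N -> exists m, [/\ (0 < m)%N, (m * m <= n)%N & (n < m.+1 * m.+1)%N].
Proof.
elim: n => [//|n IH] _.
case: (posnP n) => [->|n0]; first by exists 1%N.
have [m [m0 h1 h2]] := IH n0.
case: (ltnP n.+1 (m.+1 * m.+1)) => h3.
  by exists m; split => //; apply: leq_trans h1 _.
exists m.+1; split => //; nia.
Qed.

Theorem theorem4 (R : realType) (ls lam alpha c : R) (ntil : nat -> nat) :
  0 < ls -> 0 < lam -> 0 < alpha < 1 -> 0 < c ->
  (forall n : nat, (3 <= n)%N ->
     (1 <= ntil n <= n)%N /\ (ntil n)%:R <= c * (n%:R `^ alpha)) ->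
  exists C : R, 0 < C /\
  exists N : nat, forall n : nat, (N <= n)%N ->
    forall J : {set 'I_n}, #|J| = ntil n ->
      jammed_ring_avg_age ls lam J <=
        (if 2^-1 <= alpha then C * (n%:R `^ alpha) else C * Num.sqrt (n%:R)).
Proof.
move=> ls0 lam0 /andP[a0 a1] c0 hnt.
set k := ls / lam.
have k0 : 0 < k by apply: divr_gt0.
exists (k * (c + 6)); split.
  by apply: mulr_gt0 => //; lra.
exists 3%N => n n3 J hJ.
have [/andP[h1 _] hc] := hnt n n3.
have n0 : (0 < n)%N by apply: leq_trans n3.
have [j0 Hj0] : exists j0, j0 \in J.
  by apply/finset.set0Pn; rewrite -card_gt0 hJ.
have [m [m0 mm nm]] := @isqrt n n0.
have nm4 : (n <= 4 * m * m)%N by nia.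
set x := fun i : 'I_n => (#|Seg n J j0 Hj0 (key n J j0 Hj0 i)|%:R : R)^-1.
set X := \sum_(i < n) x i.
have hX : X <= (ntil n)%:R by rewrite -hJ; exact: sum_inv_seg.
have nR : (n%:R : R) != 0 by rewrite pnatr_eq0 -lt0n.
have laR : lam != 0 by exact: lt0r_neq0.
have F1 : jammed_ring_avg_age ls lam J <= k * X + k * (6 * m%:R).
  rewrite /jammed_ring_avg_age.
  apply: (le_trans (y := n%:R^-1 * \sum_(i < n) ls * (n%:R / lam * x i + 6 * m%:R / lam))).
    apply: ler_wpM2l; first by rewrite invr_ge0 ler0n.
    apply: ler_sum => i _; exact: node_bound.
  apply: eqle.
  rewrite (eq_bigr (fun i => (ls * (n%:R / lam)) * x i + ls * (6 * m%:R / lam))); last first.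
    by move=> i _; rewrite mulrDr mulrA.
  rewrite big_split /= -mulr_sumr sumr_const card_ord -/X -mulr_natr /k.
  by field; rewrite nR laR.
have F3 : (m%:R : R) <= Num.sqrt n%:R.
  have -> : (m%:R : R) = Num.sqrt ((m%:R : R) ^+ 2) by rewrite sqrtr_sqr ger0_norm.
  by apply: ler_wsqrtr; rewrite expr2 -natrM ler_nat.
have n1 : (1 : R) <= n%:R by rewrite ler1n.
have sqE : Num.sqrt (n%:R : R) = n%:R `^ (2^-1) by rewrite powR12_sqrt.
case: ifP => ha.
  have F4 : Num.sqrt (n%:R : R) <= n%:R `^ alpha by rewrite sqE; exact: ler_powR.
  apply: (le_trans F1); rewrite -mulrDr -mulrA; apply: ler_wpM2l; first exact: ltW.
  lra.
have F4 : n%:R `^ alpha <= Num.sqrt (n%:R : R).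
  rewrite sqE; apply: ler_powR => //; apply: ltW; rewrite ltNge ha //.
apply: (le_trans F1); rewrite -mulrDr -mulrA; apply: ler_wpM2l; first exact: ltW.
have F5 : c * n%:R `^ alpha <= c * Num.sqrt (n%:R : R) by apply: ler_wpM2l => //; exact: ltW.
lra.
Qed.
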